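(* Let $t_0\overset{i_1}{-}t_1\overset{i_2}{-}\cdots\overset{i_k}{-}t_k$ be a path in $\mathbb T_n$ and let $h_1,\dots,h_k$ be integers. Then $$\prod_{j=1}^{k}L_j^{h_j}=\sum\ \prod_{j=1}^{k}\Bigg(\begin{Bmatrix}h_j+\sum_{l=j+1}^{k}\sum_{s=1}^{r_{(l)}}s\,n_s^l\,(\hat{\mathbf c}_l^+,-d_{(j)}\mathbf c_j)_{D_0R}\\ n_0^j,n_1^j,\dots,n_{r_{(j)}}^j\end{Bmatrix}\prod_{s=1}^{r_{(j)}}z_{i_j,s}^{n_s^j}\Bigg)\hat{\mathbf y}^{\sum_{j=1}^{k}\left(\sum_{s=1}^{r_{(j)}}s\,n_s^j\right)\mathbf c_j^+},$$ the sum taken over all tuples of nonnegative integers $(n_0^1,n_1^1,\dots,n_{r_{(1)}}^1;\dots;n_0^k,n_1^k,\dots,n_{r_{(k)}}^k)$ (as an identity of formal power series in $y_1,\dots,y_n$).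
   Context: Notation: $n\ge1$; $[b]_+=\max(b,0)$. For $h\in\mathbb Z$ and $n_0,\dots,n_l\in\mathbb Z_{\ge0}$, $\begin{Bmatrix}h\\ n_0,n_1,\dots,n_l\end{Bmatrix}:=\binom{h}{n_0}\binom{n_0}{n_1,\dots,n_l}$ with $\binom{h}{n_0}=h(h-1)\cdots(h-n_0+1)/n_0!$ and the multinomial coefficient taken to be $0$ if $n_0\ne n_1+\cdots+n_l$. $\mathbb T_n$: $n$-regular tree with edges labeled $1,\dots,n$, distinct labels at each vertex; $t\overset{k}{-}t'$ an edge labeled $k$; $t_0$ root. Positive integers $r_1,\dots,r_n$, $R=\mathrm{diag}(r_i)$. Formal variables $y_1,\dots,y_n$, $z_{i,s}$ ($1\le s\le r_i-1$), $z_{i,s}=z_{i,r_i-s}$, $z_{i,0}=z_{i,r_i}=1$. $B=(b_{ij})$ skew-symmetrizable integer $n\times n$; $\hat y_i=y_i\prod_jx_j^{b_{ji}}$ for variables $x_1,\dots,x_n$, $\hat{\mathbf y}^{\mathbf a}=\prod\hat y_i^{a_i}$. Matrices: $B_{t_0}=B$, $C_{t_0}=I_n$; for $t\overset{k}{-}t'$ ($\varepsilon=\pm1$, independent): $b_{ij;t'}=-b_{ij;t}$ if $i=k$ or $j=k$, else $b_{ij;t}+r_k([-\varepsilon b_{ik;t}]_+b_{kj;t}+b_{ik;t}[\varepsilon b_{kj;t}]_+)$; $c_{ij;t'}=-c_{ij;t}$ if $j=k$, else $c_{ij;t}+r_k(c_{ik;t}[\varepsilon b_{kj;t}]_++[-\varepsilon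 c_{ik;t}]_+b_{kj;t})$. The columns $\mathbf c_{k;t}$ of $C_t$ are sign-coherent (nonzero, entries all $\ge0$ or all $\le0$) with sign $\varepsilon_{k;t}$. Form: $D_0$ positive integer diagonal with $D_0RB$ skew-symmetric, $D_0R=\mathrm{diag}(d_1^{-1},\dots,d_n^{-1})$, $(\mathbf u,\mathbf v)_{D_0R}=\mathbf u^TD_0R\mathbf v$. Path data: $d_{(j)}=d_{i_j}$, $r_{(j)}=r_{i_j}$, $\mathbf c_j=\mathbf c_{i_j;t_{j-1}}$, $\mathbf c_j^+=\varepsilon_{i_j;t_{j-1}}\mathbf c_j$ (a nonzero nonnegative vector), $\hat{\mathbf c}_j^+=B\mathbf c_j^+$. $L_1=\sum_{s=0}^{r_{(1)}}z_{i_1,s}(\hat{\mathbf y}^{\mathbf c_1^+})^s$; for $2\le l\le k$, $L_l=\sum_{s=0}^{r_{(l)}}z_{i_l,s}\big(\hat{\mathbf y}^{\mathbf c_l^+}\prod_{j=1}^{l-1}L_j^{-(\hat{\mathbf c}_l^+,d_{(j)}\mathbf c_j)_{D_0R}}\big)^s$. Each $L_j$ is a formal power series in $y_1,\dots,y_n$ (coefficients Laurent polynomials in $x$ and polynomials in $z$) with constant term $1$, so all powers are defined. *)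

(* Defs.v *)
From HB Require Import structures.
From mathcomp Require Import all_boot all_order all_algebra.
Set Implicit Arguments. Unset Strict Implicit. Unset Printing Implicit Defensive.
Import Order.TTheory GRing.Theory Num.Theory.
Local Open Scope ring_scope.

(* A monomial y^m is encoded by its exponent vector m : {ffun 'I_n -> nat}.  *)

Definition mono (n : nat) := {ffun 'I_n -> nat}.
Definition mono0 (n : nat) : mono n := [ffun => 0%N].
Definition mdeg (n : nat) (m : mono n) : nat := (\sum_(a : 'I_n) m a)%N.

Definition fps (A : comUnitRingType) (n : nat) := mono n -> A.

Section FPS.
Variables (A : comUnitRingType) (n : nat).
Implicit Types (f g : fps A n).

Definition fps_zero : fps A n := fun _ => 0.
Definition fps_one : fps A n := fun m => if m == mono0 n then 1 else 0.
Definition fps_add f g : fps A n := fun m => f m + g m.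
Definition fps_opp f : fps A n := fun m => - f m.
Definition fps_scale (c : A) f : fps A n := fun m => c * f m.
(* Cauchy product: (fg)_m = sum_{a <= m} f_a g_{m-a} *)
Definition fps_mul f g : fps A n := fun m =>
  \sum_(a : {dffun forall q : 'I_n, 'I_(m q).+1})
     f [ffun q => nat_of_ord (a q)] * g [ffun q => (m q - a q)%N].
Definition fps_pow f (p : nat) : fps A n := iter p (fps_mul f) fps_one.
(* inverse of a series with constant term 1: f^{-1} = sum_q (1 - f)^q;
   the coefficient of y^m only involves q <= deg m *)
Definition fps_inv f : fps A n := fun m =>
  \sum_(q < (mdeg m).+1) fps_pow (fps_add fps_one (fps_opp f)) q m.
Definition fps_powz f (e : int) : fps A n :=
  match e with
  | Posz p => fps_pow f p
  | Negz q => fps_pow (fps_inv f) q.+1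
  end.

(* S is the sum of the family F (in the usual topology of formal power
   series): every coefficient of S is the finite sum of the corresponding
   coefficients of the F v, all but finitely many of which vanish. *)
Definition fps_hasSum (I : eqType) (F : I -> fps A n) (S : fps A n) : Prop :=
  forall m : mono n, exists s : seq I,
    [/\ uniq s, (forall v, v \notin s -> F v m = 0) & S m = \sum_(v <- s) F v m].
End FPS.

Definition gbinom (h : int) (n0 : nat) : int :=
  divz (\prod_(q < n0) (h - q%:Z)) (n0`!)%:Z.

Definition multinom (n0 : nat) (ns : seq nat) : nat :=
  if n0 == sumn ns then (n0`! %/ \prod_(q <- ns) q`!)%N else 0%N.

Definition bracecoef (h : int) (n0 : nat) (ns : seq nat) : int :=
  gbinom h n0 * (multinom n0 ns)%:Z.

Definition ppart (b : int) : int := if 0 <= b then b else 0.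

(* Mutations of (B, C) (with the choice epsilon = +1, the result being     *)
(* independent of epsilon)                                                  *)
Section Mutation.
Variables (n : nat) (r : 'I_n -> nat).

Definition mutB (k : 'I_n) (B : 'M[int]_n) : 'M[int]_n :=
  \matrix_(a, b)
    if (a == k) || (b == k) then - B a b
    else B a b + (r k)%:Z * (ppart (- B a k) * B k b + B a k * ppart (B k b)).

Definition mutC (k : 'I_n) (B C : 'M[int]_n) : 'M[int]_n :=
  \matrix_(a, b)
    if b == k then - C a b
    else C a b + (r k)%:Z * (C a k * ppart (B k b) + ppart (- C a k) * B k b).

(* (B_{t_j}, C_{t_j}) along the path t_0 -i 1- t_1 -i 2- ... *)
Fixpoint BCpath (B : 'M[int]_n) (i : nat -> 'I_n) (j : nat) : 'M[int]_n * 'M[int]_n :=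
  match j with
  | 0 => (B, 1%:M)
  | j'.+1 => let BC := BCpath B i j' in
             (mutB (i j) BC.1, mutC (i j) BC.1 BC.2)
  end.
End Mutation.

Section PathData.
Variables (A : comUnitRingType) (n : nat) (r : 'I_n -> nat) (B : 'M[int]_n)
  (D0 : 'I_n -> int) (x : 'I_n -> A) (z : 'I_n -> nat -> A) (i : nat -> 'I_n).

(* c_j = c_{i_j ; t_{j-1}}, j >= 1 *)
Definition cvec (j : nat) : 'I_n -> int := fun a => (BCpath r B i j.-1).2 a (i j).
Definition csign (j : nat) : int := if [forall a, 0 <= cvec j a] then 1 else -1.
Definition cplus (j : nat) : 'I_n -> int := fun a => csign j * cvec j a.
Definition cplus_mono (j : nat) : mono n := [ffun a => absz (cplus j a)].
Definition chat (j : nat) : 'I_n -> int := fun a => \sum_(b : 'I_n) B a b * cplus j b.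
(* (\hat c_l^+, d_(j) c_j)_{D_0 R} = d_{i_j} * \hat c_l^+^T D_0 R c_j,
   with d_{i_j}^{-1} = D0_{i_j} r_{i_j}  (this is an integer) *)
Definition pairing (l j : nat) : int :=
  divz (\sum_(a : 'I_n) chat l a * (D0 a * (r a)%:Z) * cvec j a)
       (D0 (i j) * (r (i j))%:Z).

(* \hat y^a = y^a * prod_j x_j^{(B a)_j} *)
Definition yhat (a : mono n) : fps A n := fun m =>
  if m == a then \prod_(q : 'I_n) x q ^ (\sum_(p : 'I_n) B q p * (a p)%:Z) else 0.

Definition Lnext (prev : seq (fps A n)) (j : nat) : fps A n :=
  let Y := fps_mul (yhat (cplus_mono j))
             (\big[(@fps_mul A n)/(@fps_one A n)]_(1 <= l < j)
                 fps_powz (nth (@fps_zero A n) prev l.-1) (- pairing j l)) in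
  \big[(@fps_add A n)/(@fps_zero A n)]_(s < (r (i j)).+1) fps_scale (z (i j) s) (fps_pow Y s).

Fixpoint Lseq (j : nat) : seq (fps A n) :=
  match j with
  | 0 => [::]
  | j'.+1 => rcons (Lseq j') (Lnext (Lseq j') j)
  end.

(* L_j, j >= 1 *)
Definition Lser (j : nat) : fps A n := nth (@fps_zero A n) (Lseq j) j.-1.

Variables (k : nat) (h : nat -> int).
(* a tuple (n^1_0..n^1_{r_(1)}; ...; n^k_0..n^k_{r_(k)}) is encoded as
   nu : seq (seq nat) with nth [::] nu (j-1) = [:: n^j_0; ...; n^j_{r_(j)}] *)
Definition nu_shape (nu : seq (seq nat)) : bool :=
  (size nu == k) && [forall j : 'I_k, size (nth [::] nu j) == (r (i j.+1)).+1].
Definition nuc (nu : seq (seq nat)) (j s : nat) : nat := nth 0%N (nth [::] nu j.-1) s.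
Definition sdeg (nu : seq (seq nat)) (j : nat) : nat :=
  (\sum_(1 <= s < (r (i j)).+1) s * nuc nu j s)%N.

Definition upper (nu : seq (seq nat)) (j : nat) : int :=
  h j + \sum_(j.+1 <= l < k.+1) (sdeg nu l)%:Z * (- pairing l j).

Definition jfactor (nu : seq (seq nat)) (j : nat) : A :=
  (bracecoef (upper nu j) (nuc nu j 0) [seq nuc nu j s | s <- iota 1 (r (i j))])%:~R
  * \prod_(1 <= s < (r (i j)).+1) z (i j) s ^+ nuc nu j s.

Definition rhs_exp (nu : seq (seq nat)) : mono n :=
  [ffun a => (\sum_(1 <= j < k.+1) sdeg nu j * cplus_mono j a)%N].

Definition rhs_term (nu : seq (seq nat)) : fps A n :=
  if nu_shape nu then
    fps_scale (\prod_(1 <= j < k.+1) jfactor nu j) (yhat (rhs_exp nu))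
  else @fps_zero A n.

Definition lhs : fps A n :=
  \big[(@fps_mul A n)/(@fps_one A n)]_(1 <= j < k.+1) fps_powz (Lser j) (h j).
End PathData.

(* Main.v *)
Require Import Defs.
From HB Require Import structures.
From mathcomp Require Import all_boot all_order all_algebra zify ring.
From mathcomp Require Import boolp.
Import Order.TTheory GRing.Theory Num.Theory.
Set Implicit Arguments. Unset Strict Implicit. Unset Printing Implicit Defensive.

Module W1.
Local Open Scope ring_scope.

Section Mono.
Variable n : nat.
Implicit Types a b c m : mono n.

Definition madd a b : mono n := [ffun q => (a q + b q)%N].
Definition msub a b : mono n := [ffun q => (a q - b q)%N].
Definition mle a b : bool := [forall q, (a q <= b q)%N].
Definition conv m (a : {dffun forall q : 'I_n, 'I_(m q).+1}) : mono n :=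
  [ffun q => nat_of_ord (a q)].
Definition lower m : seq (mono n) := map (@conv m) (index_enum _).

Lemma mleP a b : reflect (forall q, (a q <= b q)%N) (mle a b).
Proof. exact: forallP. Qed.

Lemma conv_inj m : injective (@conv m).
Proof.
move=> a a' e; apply/ffunP => q; apply: val_inj.
by have := congr1 (fun f : mono n => f q) e; rewrite !ffunE.
Qed.

Lemma lower_uniq m : uniq (lower m).
Proof. by rewrite map_inj_uniq ?index_enum_uniq //; apply: conv_inj. Qed.

Lemma mem_lower m b : (b \in lower m) = mle b m.
Proof.
apply/idP/idP.
  case/mapP=> a _ ->; apply/mleP => q; rewrite ffunE.
  by rewrite -ltnS ltn_ord.
move/mleP=> H.
apply/mapP; exists ([ffun q => inord (b q)] : {dffun forall q : 'I_n, 'I_(m q).+1}).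
  by rewrite mem_index_enum.
by apply/ffunP => q; rewrite !ffunE inordK // ltnS.
Qed.

Lemma big_lower (R : Type) (idx : R) (op : Monoid.law idx) m (F : mono n -> R) :
  \big[op/idx]_(a : {dffun forall q : 'I_n, 'I_(m q).+1}) F [ffun q => nat_of_ord (a q)]
  = \big[op/idx]_(b <- lower m) F b.
Proof. by rewrite /lower big_map. Qed.

End Mono.

Lemma uniq_allpairs_pair (S T : eqType) (s : seq S) (t : S -> seq T) :
  uniq s -> (forall x, x \in s -> uniq (t x)) -> uniq [seq (x, y) | x <- s, y <- t x].
Proof.
elim: s => //= x s IH /andP[xs us] ut.
rewrite cat_uniq map_inj_uniq ?ut ?mem_head //; last by move=> y y' [].
rewrite IH //; last by move=> y ys; apply: ut; rewrite inE ys orbT.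
rewrite ?andbT; apply/hasPn => p /allpairsPdep [xx [y [x1s _ ->]]].
by apply/mapP => -[y' _ [ex _]]; move: xs; rewrite -ex x1s.
Qed.

Section MonoLemmas.
Variable n : nat.
Implicit Types a b c m : mono n.

Lemma msubK a b : mle b a -> madd b (msub a b) = a.
Proof. by move/mleP=> H; apply/ffunP=> q; rewrite !ffunE subnKC. Qed.
Lemma maddK a b : msub (madd b a) b = a.
Proof. by apply/ffunP=> q; rewrite !ffunE addKn. Qed.
Lemma maddC a b : madd a b = madd b a.
Proof. by apply/ffunP=> q; rewrite !ffunE addnC. Qed.
Lemma msubKK a b : mle b a -> msub a (msub a b) = b.
Proof. by move/mleP=> H; apply/ffunP=> q; rewrite !ffunE subKn. Qed.
Lemma mle_trans a b c : mle a b -> mle b c -> mle a c.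
Proof. by move/mleP=> H1 /mleP H2; apply/mleP=> q; exact: leq_trans (H1 q) (H2 q). Qed.
Lemma mle_sub a b : mle (msub a b) a.
Proof. by apply/mleP=> q; rewrite ffunE leq_subr. Qed.
Lemma mle_refl a : mle a a.
Proof. by apply/mleP. Qed.
Lemma mle0 a : mle (mono0 n) a.
Proof. by apply/mleP=> q; rewrite ffunE. Qed.
Lemma msubA a b c : msub (msub a b) c = msub a (madd b c).
Proof. by apply/ffunP=> q; rewrite !ffunE subnDA. Qed.

Lemma mle_madd a b c : mle b (msub a c) -> mle c a -> mle (madd c b) a.
Proof.
move/mleP=> H1 /mleP H2; apply/mleP=> q; have := H1 q; rewrite !ffunE.
by rewrite leq_subRL.
Qed.

Lemma sum_lower2 (R : Type) (idx : R) (op : Monoid.com_law idx) m (F : mono n -> mono n -> R) :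
  \big[op/idx]_(a <- lower m) \big[op/idx]_(b <- lower a) F a b =
  \big[op/idx]_(b <- lower m) \big[op/idx]_(c <- lower (msub m b)) F (madd b c) b.
Proof.
rewrite -(@big_allpairs_dep _ _ _ _ (fun=> mono n) _ (fun a b => (a, b)) _ _ (fun p => F p.1 p.2)).
rewrite -(@big_allpairs_dep _ _ _ _ (fun=> mono n) _ (fun b c => (b, c)) _ _ (fun p => F (madd p.1 p.2) p.1)).
rewrite -(big_map (fun p => (madd p.1 p.2, p.1)) predT (fun p => F p.1 p.2)).
apply: perm_big; apply: uniq_perm.
- by apply: uniq_allpairs_pair => *; exact: lower_uniq.
- rewrite map_inj_in_uniq; first by apply: uniq_allpairs_pair => *; exact: lower_uniq.
  move=> [b c] [b' c'] /allpairsPdep[b1 [c1 [_ _ [-> ->]]]].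
  move=> /allpairsPdep[b2 [c2 [_ _ [-> ->]]]] /= [e1 e2].
  by subst b2; rewrite -(maddK c1 b1) e1 maddK.
move=> [a b]; apply/allpairsPdep/mapP.
  move=> [a1 [b1 [h1 h2 [-> ->]]]].
  rewrite mem_lower in h1; rewrite mem_lower in h2.
  exists (b1, msub a1 b1); last by rewrite /= msubK.
  apply/allpairsPdep; exists b1, (msub a1 b1); split => //.
    by rewrite mem_lower (mle_trans h2 h1).
  rewrite mem_lower; apply/mleP=> q; rewrite !ffunE; apply: leq_sub2r.
  by move/mleP: h1; apply.
move=> [[b1 c1] /allpairsPdep[b2 [c2 [h1 h2 [e1 e2]]]] [-> ->]] /=.
subst b1 c1; exists (madd b2 c2), b2; split => //.
  by rewrite mem_lower mle_madd // -mem_lower.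
by rewrite mem_lower; apply/mleP=> q; rewrite ffunE leq_addr.
Qed.

Lemma sum_lower_rev (R : Type) (idx : R) (op : Monoid.com_law idx) m (F : mono n -> R) :
  \big[op/idx]_(a <- lower m) F a = \big[op/idx]_(a <- lower m) F (msub m a).
Proof.
rewrite -(big_map (msub m) predT F); apply: perm_big; apply: uniq_perm.
- exact: lower_uniq.
- rewrite map_inj_in_uniq ?lower_uniq // => a b; rewrite !mem_lower => ha hb e.
  by rewrite -(msubKK ha) e msubKK.
move=> a; apply/idP/mapP.
  rewrite mem_lower => ha; exists (msub m a); first by rewrite mem_lower mle_sub.
  by rewrite msubKK.
by move=> [b hb ->]; rewrite mem_lower mle_sub.
Qed.

Lemma sum_lower_pick (R : nmodType) m a (F : mono n -> R) :
  \sum_(b <- lower m) (if b == a then F b else 0) = if mle a m then F a else 0.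
Proof.
rewrite -big_mkcond /= -mem_lower.
case: ifP => ha.
  rewrite (perm_big _ (perm_to_rem ha)) /= big_cons eqxx big1_seq ?addr0 //.
  move=> b /andP[/eqP -> hb]; have := lower_uniq m.
  by rewrite (perm_uniq (perm_to_rem ha)) /= hb.
rewrite big1_seq // => b /andP[/eqP -> hb]; by rewrite hb in ha.
Qed.

End MonoLemmas.

End W1.
Import W1.

Module W2.
Local Open Scope ring_scope.

Definition FPS (A : comUnitRingType) (n : nat) := fps A n.
HB.instance Definition _ A n := Choice.on (FPS A n).

Section FPSring.
Variables (A : comUnitRingType) (n : nat).
Local Notation F := (FPS A n).
Implicit Types f g u : F.

Lemma fps_addA : associative (@fps_add A n).
Proof. by move=> f g u; apply: funext => m; rewrite /fps_add addrA. Qed.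
Lemma fps_addC : commutative (@fps_add A n).
Proof. by move=> f g; apply: funext => m; rewrite /fps_add addrC. Qed.
Lemma fps_add0 : left_id (@fps_zero A n) (@fps_add A n).
Proof. by move=> f; apply: funext => m; rewrite /fps_add /fps_zero add0r. Qed.
Lemma fps_addN : left_inverse (@fps_zero A n) (@fps_opp A n) (@fps_add A n).
Proof. by move=> f; apply: funext => m; rewrite /fps_add /fps_zero /fps_opp addNr. Qed.

HB.instance Definition _ := GRing.isZmodule.Build F fps_addA fps_addC fps_add0 fps_addN.

Lemma mulE f g m : fps_mul f g m = \sum_(a <- lower m) f a * g (msub m a).
Proof.
rewrite /fps_mul -big_lower; apply: eq_bigr => a _; congr (_ * g _).
by apply/ffunP => q; rewrite !ffunE.
Qed.

Lemma fps_mulC : commutative (@fps_mul A n).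
Proof.
move=> f g; apply: funext => m; rewrite !mulE (sum_lower_rev _ _ (fun a => f a * g (msub m a))).
apply: eq_big_seq => a; rewrite mem_lower => ha; by rewrite msubKK // mulrC.
Qed.

Lemma fps_mul1 : left_id (@fps_one A n) (@fps_mul A n).
Proof.
move=> f; apply: funext => m; rewrite mulE.
rewrite (eq_bigr (fun a => if a == mono0 n then f (msub m a) else 0)).
  rewrite sum_lower_pick mle0; congr f; apply/ffunP=> q; rewrite !ffunE subn0 //.
by move=> a _; rewrite /fps_one; case: eqP => _; rewrite ?mul1r ?mul0r.
Qed.

Lemma fps_mulDl : left_distributive (@fps_mul A n) (@fps_add A n).
Proof.
move=> f g u; apply: funext => m; rewrite /fps_add !mulE -big_split /=.
by apply: eq_bigr => a _; rewrite mulrDl.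
Qed.

Lemma fps_mulA : associative (@fps_mul A n).
Proof.
move=> f g u; apply: funext => m; symmetry.
rewrite !mulE.
transitivity (\sum_(a <- lower m) \sum_(b <- lower a) f b * g (msub a b) * u (msub m a)).
  by apply: eq_bigr => a _; rewrite mulE mulr_suml.
rewrite (sum_lower2 _ _ (fun a b => f b * g (msub a b) * u (msub m a))).
apply: eq_bigr => b _; rewrite mulE mulr_sumr; apply: eq_bigr => c _.
by rewrite maddK -msubA mulrA.
Qed.

End FPSring.

HB.instance Definition _ A n := GRing.Zmodule_isComPzRing.Build (FPS A n)
  (@fps_mulA A n) (@fps_mulC A n) (@fps_mul1 A n) (@fps_mulDl A n).

Section FPSlemmas.
Variables (A : comUnitRingType) (n : nat).
Local Notation F := (FPS A n).
Implicit Types f g u : F.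

Lemma fmulE f g m : (f * g) m = \sum_(a <- lower m) f a * g (msub m a).
Proof. exact: mulE. Qed.
Lemma faddE f g m : (f + g) m = f m + g m.
Proof. by []. Qed.
Lemma foppE f m : (- f) m = - f m.
Proof. by []. Qed.
Lemma fsubE f g m : (f - g) m = f m - g m.
Proof. by []. Qed.
Lemma fzeroE m : (0 : F) m = 0.
Proof. by []. Qed.
Lemma foneE m : (1 : F) m = if m == mono0 n then 1 else 0.
Proof. by []. Qed.
Lemma fsumE (I : Type) (s : seq I) (P : pred I) (G : I -> F) m :
  (\sum_(i <- s | P i) G i) m = \sum_(i <- s | P i) G i m.
Proof. by apply: (big_morph (fun f : F => f m)). Qed.
Lemma fpowE f p : fps_pow f p = f ^+ p.
Proof. by elim: p => // p IH; rewrite exprS -IH. Qed.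
Lemma fbigmulE (I : Type) (s : seq I) (P : pred I) (G : I -> F) :
  \big[(@fps_mul A n)/(@fps_one A n)]_(i <- s | P i) G i = \prod_(i <- s | P i) G i.
Proof. by []. Qed.
Lemma fbigaddE (I : Type) (s : seq I) (P : pred I) (G : I -> F) :
  \big[(@fps_add A n)/(@fps_zero A n)]_(i <- s | P i) G i = \sum_(i <- s | P i) G i.
Proof. by []. Qed.

Definition cst (c : A) : F := fun m => if m == mono0 n then c else 0.
Lemma cstE c f m : (cst c * f) m = c * f m.
Proof.
rewrite fmulE (eq_bigr (fun a => if a == mono0 n then c * f (msub m a) else 0)).
  rewrite sum_lower_pick mle0; congr (_ * f _); apply/ffunP=> q; rewrite !ffunE subn0 //.
by move=> a _; rewrite /cst; case: eqP => _; rewrite ?mul0r.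
Qed.
Lemma scaleE c f : fps_scale c f = cst c * f.
Proof. by apply: funext => m; rewrite cstE. Qed.
Lemma cst1 : cst 1 = 1.
Proof. by []. Qed.
Lemma cstD c d : cst (c + d) = cst c + cst d.
Proof. by apply: funext => m; rewrite faddE /cst; case: eqP; rewrite ?addr0. Qed.
Lemma cstM c d : cst (c * d) = cst c * cst d.
Proof. by apply: funext => m; rewrite cstE /cst; case: eqP; rewrite ?mulr0. Qed.
Lemma cst0 : cst 0 = 0.
Proof. by apply: funext => m; rewrite /cst; case: eqP. Qed.
Lemma cstN c : cst (- c) = - cst c.
Proof. by apply: funext => m; rewrite foppE /cst; case: eqP; rewrite ?oppr0. Qed.

Definition eqm m f g := forall a, mle a m -> f a = g a.

Lemma eqm_refl m f : eqm m f f. Proof. by []. Qed.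
Lemma eqm_sym m f g : eqm m f g -> eqm m g f.
Proof. by move=> H a ha; rewrite H. Qed.
Lemma eqm_trans m f g u : eqm m f g -> eqm m g u -> eqm m f u.
Proof. by move=> H1 H2 a ha; rewrite H1 ?H2. Qed.
Lemma eqmD m f g f' g' : eqm m f f' -> eqm m g g' -> eqm m (f + g) (f' + g').
Proof. by move=> H1 H2 a ha; rewrite !faddE H1 ?H2. Qed.
Lemma eqmM m f g f' g' : eqm m f f' -> eqm m g g' -> eqm m (f * g) (f' * g').
Proof.
move=> H1 H2 a ha; rewrite !fmulE; apply: eq_big_seq => b; rewrite mem_lower => hb.
rewrite H1 ?H2 //; first exact: mle_trans (mle_sub _ _) ha.
exact: mle_trans hb ha.
Qed.
Lemma eqmX m f g p : eqm m f g -> eqm m (f ^+ p) (g ^+ p).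
Proof. by move=> H; elim: p => // p IH; rewrite !exprS; apply: eqmM. Qed.
Lemma eqm_sum (m : mono n) (I : eqType) (s : seq I) (G G' : I -> F) :
  (forall i, i \in s -> eqm m (G i) (G' i)) -> eqm m (\sum_(i <- s) G i) (\sum_(i <- s) G' i).
Proof.
by move=> H a ha; rewrite !fsumE; apply: eq_big_seq => i hi; apply: H.
Qed.
Lemma eqm_prod (m : mono n) (I : eqType) (s : seq I) (G G' : I -> F) :
  (forall i, i \in s -> eqm m (G i) (G' i)) -> eqm m (\prod_(i <- s) G i) (\prod_(i <- s) G' i).
Proof.
elim: s => [|x s IH] H; first by rewrite !big_nil.
rewrite !big_cons; apply: eqmM; first by apply: H; rewrite mem_head.
by apply: IH => i hi; apply: H; rewrite inE hi orbT.
Qed.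
Lemma eqm_eq m f g : f = g -> eqm m f g.
Proof. by move=> ->. Qed.

End FPSlemmas.

End W2.
Import W2.

Module W3.
Local Open Scope ring_scope.

Section Deg.
Variable n : nat.
Implicit Types a b m : mono n.

Lemma mdeg_add a b : mdeg (madd a b) = (mdeg a + mdeg b)%N.
Proof. by rewrite /mdeg -big_split /=; apply: eq_bigr => q _; rewrite ffunE. Qed.

Lemma mdeg_sub a b : mle b a -> mdeg (msub a b) = (mdeg a - mdeg b)%N.
Proof. by move=> h; rewrite -{2}(msubK h) mdeg_add addKn. Qed.

Lemma mdeg_le a b : mle a b -> (mdeg a <= mdeg b)%N.
Proof. by move/mleP=> h; apply: leq_sum => q _. Qed.

Lemma mdeg_eq0 a : (mdeg a == 0%N) = (a == mono0 n).
Proof.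
apply/idP/eqP; last by move=> ->; rewrite /mdeg big1 // => q _; rewrite ffunE.
rewrite /mdeg sum_nat_eq0 => /forallP h; apply/ffunP => q; rewrite ffunE.
by apply/eqP; have := h q; rewrite implyTb.
Qed.

Lemma mle0E a : mle a (mono0 n) = (a == mono0 n).
Proof.
apply/idP/eqP; last by move=> ->; exact: mle_refl.
move/mdeg_le; rewrite (_ : mdeg (mono0 n) = 0%N) ?leqn0 ?mdeg_eq0 => [/eqP //|].
by apply/eqP; rewrite mdeg_eq0.
Qed.

End Deg.

Section Inv.
Variables (A : comUnitRingType) (n : nat).
Local Notation F := (FPS A n).
Implicit Types f g u : F.
Definition fpsinv f : F := fps_inv f.
Definition powz f e : F := fps_powz f e.

Lemma fmul0 f g : (f * g) (mono0 n) = f (mono0 n) * g (mono0 n).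
Proof.
rewrite fmulE (eq_big_seq (fun a => if a == mono0 n then f (mono0 n) * g (mono0 n) else 0)).
  by rewrite sum_lower_pick mle_refl.
move=> a; rewrite mem_lower mle0E => /eqP ->; rewrite eqxx; congr (_ * g _).
by apply/ffunP => q; rewrite !ffunE.
Qed.

Lemma pow_vanish u : u (mono0 n) = 0 -> forall q a, (mdeg a < q)%N -> (u ^+ q) a = 0.
Proof.
move=> u0; elim=> // q IH a ha; rewrite exprS fmulE big1_seq // => b /andP[_].
rewrite mem_lower => hb.
case: (eqVneq b (mono0 n)) => [->|bn0]; first by rewrite u0 mul0r.
rewrite IH ?mulr0 // mdeg_sub //.
have : mdeg b != 0%N by rewrite mdeg_eq0.
have := mdeg_le hb; lia.
Qed.

Lemma eqm_pow0 u m q : u (mono0 n) = 0 -> (mdeg m < q)%N -> eqm m (u ^+ q) 0.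
Proof.
move=> u0 hq a ha; rewrite pow_vanish //.
by apply: leq_ltn_trans hq; apply: mdeg_le.
Qed.

Lemma fpsinv_mul f : f (mono0 n) = 1 -> fpsinv f * f = 1.
Proof.
move=> f0; apply: funext => m.
set u : F := 1 - f.
have u0 : u (mono0 n) = 0 by rewrite /u fsubE foneE eqxx f0 subrr.
pose N := mdeg m.
pose S := \sum_(q < N.+1) u ^+ q.
have e1 : eqm m (fpsinv f) S.
  move=> a ha; rewrite /fpsinv /fps_inv.
  have -> : fps_add (@fps_one A n) (fps_opp f) = u by [].
  under eq_bigr do rewrite fpowE.
  rewrite /S fsumE.
  have haN : ((mdeg a).+1 <= N.+1)%N by rewrite ltnS; apply: mdeg_le.
  rewrite -!(big_mkord xpredT (fun q => (u ^+ q) a)).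
  rewrite (big_cat_nat (leq0n _) haN) /= [X in _ + X]big1_seq ?addr0 //.
  by move=> q /andP[_]; rewrite mem_index_iota => /andP[hq _]; apply: pow_vanish.
have e2 : S * f = 1 - u ^+ N.+1.
  have -> : f = 1 - u by rewrite /u opprB addrC subrK.
  have := subrXX 1 u N.+1; rewrite expr1n => ->.
  by rewrite /S mulrC; congr (_ * _); apply: eq_bigr => q _; rewrite expr1n mul1r.
have := eqmM e1 (@eqm_refl _ _ m f) (mle_refl m); rewrite e2 => ->.
by rewrite fsubE (eqm_pow0 u0 (ltnSn _) (mle_refl m)) fzeroE subr0.
Qed.

Section Powz.
Variable f : F.
Hypothesis f0 : f (mono0 n) = 1.
Local Notation g := (fpsinv f).

Lemma powz_pos p : powz f p%:Z = f ^+ p.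
Proof. exact: fpowE. Qed.
Lemma powz_neg q : powz f (Negz q) = g ^+ q.+1.
Proof. exact: fpowE. Qed.

Lemma powzS e : powz f (e + 1) = f * powz f e.
Proof.
case: e => [p|q].
  have -> : p%:Z + 1 = p.+1%:Z by rewrite -addn1 PoszD.
  by rewrite !powz_pos exprS.
case: q => [|q].
  rewrite (_ : Negz 0 + 1 = 0%:Z) // powz_pos powz_neg expr1 expr0 mulrC fpsinv_mul //.
rewrite (_ : Negz q.+1 + 1 = Negz q); last by rewrite !NegzE; lia.
by rewrite !powz_neg [in RHS]exprS mulrA (mulrC f) fpsinv_mul // mul1r.
Qed.

Lemma powz_addn e p : powz f (e + p%:Z) = powz f e * f ^+ p.
Proof.
elim: p => [|p IH]; first by rewrite addr0 expr0 mulr1.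
have -> : p.+1%:Z = p%:Z + 1 by rewrite -addn1 PoszD.
by rewrite addrA powzS IH exprS mulrCA.
Qed.

Lemma powzD a b : powz f (a + b) = powz f a * powz f b.
Proof.
case: b => [p|q]; first by rewrite powz_addn powz_pos.
have ea : a = (a + Negz q) + q.+1%:Z by rewrite NegzE; lia.
rewrite {2}ea powz_addn powz_neg -mulrA -exprMn (mulrC f) fpsinv_mul // expr1n mulr1 //.
Qed.

Lemma powz0 : powz f 0 = 1.
Proof. by []. Qed.

Lemma powzMn e d : powz f (e * d%:Z) = powz f e ^+ d.
Proof.
elim: d => [|d IH]; first by rewrite mulr0 expr0.
by rewrite -addn1 PoszD mulrDr mulr1 powzD IH exprD expr1.
Qed.

End Powz.
End Inv.

End W3.
Import W3.

Module W4.
Local Open Scope ring_scope.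

Lemma prod_pos_ffact (p m : nat) : \prod_(q < m) (p%:Z - q%:Z) = (p ^_ m)%N%:Z.
Proof.
elim: m => [|m IH]; first by rewrite big_ord0 ffactn0.
rewrite big_ord_recr /= IH ffactnSr PoszM.
case: (leqP m p) => hm; first by rewrite subzn.
by rewrite ffact_small // mul0r.
Qed.

Lemma prod_neg_ffact (q m : nat) : \prod_(j < m) (Negz q - j%:Z) = (-1) ^+ m * ((q + m) ^_ m)%N%:Z.
Proof.
elim: m => [|m IH]; first by rewrite big_ord0 addn0 ffactn0 expr0 mulr1.
rewrite big_ord_recr /= IH addnS ffactSS PoszM NegzE exprS.
have -> : (- (q.+1)%:Z - m%:Z) = -1 * (q + m).+1%:Z by lia.
ring.
Qed.

Lemma gbinom_pos (p m : nat) : gbinom p%:Z m = 'C(p, m)%:Z.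
Proof.
rewrite /gbinom prod_pos_ffact -bin_ffact PoszM mulzK //.
by rewrite eqz_nat -lt0n fact_gt0.
Qed.

Lemma gbinom_neg (q m : nat) : gbinom (Negz q) m = (-1) ^+ m * 'C(q + m, m)%:Z.
Proof.
rewrite /gbinom prod_neg_ffact -bin_ffact PoszM mulrA mulzK //.
by rewrite eqz_nat -lt0n fact_gt0.
Qed.

Lemma gbinom0 h : gbinom h 0 = 1.
Proof. by rewrite /gbinom big_ord0 divz1. Qed.

Lemma gbinomS h m : gbinom (h + 1) m.+1 = gbinom h m.+1 + gbinom h m.
Proof.
case: h => [p|[|q]].
- have -> : p%:Z + 1 = p.+1%:Z by rewrite -addn1 PoszD.
  by rewrite !gbinom_pos binS PoszD.
- rewrite (_ : Negz 0 + 1 = 0%:Z) // gbinom_pos !gbinom_neg bin_small // !add0n !binn.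
  by rewrite exprS; ring.
- rewrite (_ : Negz q.+1 + 1 = Negz q); last by rewrite !NegzE; lia.
  rewrite !gbinom_neg.
  have -> : (q.+1 + m.+1 = (q.+1 + m).+1)%N by rewrite addnS.
  rewrite binS (_ : (q + m.+1 = q.+1 + m)%N); last by lia.
  rewrite binS PoszD exprS; ring.
Qed.

Lemma prod_fact_dvd (t : seq nat) : (\prod_(q <- t) q`! %| (sumn t)`!)%N.
Proof.
elim: t => [|x t IH]; first by rewrite big_nil.
rewrite big_cons /= -(bin_fact (leq_addr (sumn t) x)) addKn.
by rewrite mulnCA dvdn_mul // dvdn_mull.
Qed.

Lemma multinom_nil n0 : multinom n0 [::] = (n0 == 0)%N.
Proof. by case: n0 => [|n0]; rewrite /multinom /= ?big_nil. Qed.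

Lemma multinom_cons n0 x t :
  multinom n0 (x :: t) = if (x <= n0)%N then ('C(n0, x) * multinom (n0 - x) t)%N else 0%N.
Proof.
rewrite /multinom /= big_cons.
case: leqP => hx; last by rewrite ifF //; apply/negbTE; lia.
have -> : (n0 == x + sumn t) = (n0 - x == sumn t)%N by apply/eqP/eqP; lia.
case: eqP => [e|]; last by rewrite muln0.
have [Q eQ] := dvdnP (prod_fact_dvd t).
have e0 : n0 = (x + sumn t)%N by lia.
rewrite e {1}e0 -(bin_fact (leq_addr (sumn t) x)) addKn eQ.
have hP : (0 < \prod_(q <- t) q`!)%N by rewrite prodn_gt0 // => q; rewrite fact_gt0.
rewrite mulnK // (_ : ('C(x + sumn t, x) * (x`! * (Q * \prod_(q <- t) q`!)) =
   ('C(x + sumn t, x) * Q) * (x`! * \prod_(q <- t) q`!))%N); last first.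
  by ring.
by rewrite mulnK // -?e0 // muln_gt0 fact_gt0.
Qed.

Fixpoint tuples (l N : nat) : seq (seq nat) :=
  if l is l'.+1 then [seq x :: t | x <- iota 0 N.+1, t <- tuples l' N] else [:: [::]].

Lemma tuples_uniq l N : uniq (tuples l N).
Proof.
elim: l => [|l IH] //; change (uniq [seq x :: t | x <- iota 0 N.+1, t <- tuples l N]).
apply: allpairs_uniq => //; first exact: iota_uniq.
by move=> [x t] [x' t'] _ _ /= [-> ->].
Qed.

Lemma mem_tuples l N t : (t \in tuples l N) = (size t == l) && all (fun x => x <= N)%N t.
Proof.
elim: l t => [|l IH] t.
  by case: t => [|x t]; rewrite /= ?inE.
change (t \in [seq x :: t | x <- iota 0 N.+1, t <- tuples l N]) with
  (t \in [seq x :: t | x <- iota 0 N.+1, t <- tuples l N]).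
apply/allpairsP/idP.
  move=> [[a b] [ha hb ->]]; rewrite IH in hb.
  rewrite mem_iota add0n ltnS in ha; move: ha hb => /= ha /andP[h1 h2]. by rewrite eqSS h1 ha h2.
case: t => [|x t] //=; rewrite eqSS => /andP[st /andP[xN ta]]; exists (x, t); split => //=.
  by rewrite -/(iota 0 N.+1) mem_iota add0n ltnS.
by rewrite IH st.
Qed.

Lemma multinomial (R : comPzRingType) (a : nat -> R) r lo N n0 : (n0 <= N)%N ->
  (\sum_(lo <= s < lo + r) a s) ^+ n0 =
  \sum_(t <- tuples r N) (multinom n0 t)%:R * \prod_(lo <= s < lo + r) a s ^+ nth 0%N t (s - lo).
Proof.
elim: r lo n0 => [|r IH] lo n0 hn0.
  rewrite addn0 big_geq // expr0n /= big_seq1 big_geq // mulr1 multinom_nil.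
  by case: eqP.
rewrite (_ : tuples r.+1 N = [seq x :: t | x <- iota 0 N.+1, t <- tuples r N]) //.
rewrite (@big_allpairs_dep _ _ _ _ (fun=> seq nat) _ (fun x t => x :: t)).
rewrite big_ltn ?addnS ?ltnS ?leq_addr // -addSn addrC exprDn.
have hN : (n0.+1 <= N.+1)%N by [].
rewrite -(big_mkord xpredT (fun i => (_ ^+ (n0 - i) * a lo ^+ i) *+ 'C(n0, i))).
rewrite (_ : iota 0 N.+1 = index_iota 0 N.+1) // [RHS](big_cat_nat (leq0n n0.+1) hN) /=.
rewrite [X in _ = _ + X]big1_seq ?addr0; last first.
  move=> x /andP[_]; rewrite mem_index_iota => /andP[hx _].
  by rewrite big1 // => t _; rewrite multinom_cons leqNgt hx /= mul0r.
apply: eq_big_nat => x /andP[_ hx]; rewrite ltnS in hx.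
rewrite IH ?(leq_trans (leq_subr _ _)) // mulr_suml -sumrMnl; apply: eq_bigr => t _.
rewrite multinom_cons hx [X in _ = _ * X]big_ltn; last lia.
rewrite subnn /=.
rewrite [X in _ = _ * (_ * X)](eq_big_nat _ _ (F2 := fun s => a s ^+ nth 0%N t (s - lo.+1))); last first.
  move=> s /andP[hs _]; congr (_ ^+ _); rewrite (_ : (s - lo = (s - lo.+1).+1)%N) //; lia.
rewrite -(mulr_natl (_ * a lo ^+ x) 'C(n0, x)) natrM.
by rewrite -!mulrA (mulrC (a lo ^+ x)).
Qed.

End W4.
Import W4.

Module W5.
Local Open Scope ring_scope.

Definition mscale n (d : nat) (a : mono n) : mono n := [ffun q => (d * a q)%N].

Section Yhat.
Variables (A : comUnitRingType) (n : nat) (B : 'M[int]_n) (x : 'I_n -> A).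
Hypothesis xU : forall a, x a \is a GRing.unit.
Local Notation F := (FPS A n).
Local Notation Y a := (yhat B x a : F).
Definition Xc (a : mono n) : A := \prod_(q : 'I_n) x q ^ (\sum_(p : 'I_n) B q p * (a p)%:Z).

Lemma yhatE a m : Y a m = if m == a then Xc a else 0.
Proof. by []. Qed.

Lemma XcD a b : Xc (madd a b) = Xc a * Xc b.
Proof.
rewrite /Xc -big_split /=; apply: eq_bigr => q _.
rewrite -exprzDr // -big_split /=; congr (_ ^ _); apply: eq_bigr => p _.
by rewrite ffunE PoszD mulrDr.
Qed.

Lemma yhatM a b : Y a * Y b = Y (madd a b).
Proof.
apply: funext => m; rewrite fmulE.
rewrite (eq_bigr (fun c => if c == a then Xc a * Y b (msub m a) else 0)); last first.
  by move=> c _; rewrite yhatE; case: eqP => [->|]; rewrite ?mul0r.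
rewrite sum_lower_pick !yhatE.
case: (eqVneq m (madd a b)) => [->|ne].
  have hle : mle a (madd a b) by apply/mleP => q; rewrite ffunE leq_addr.
  have -> : msub (madd a b) a = b by apply/ffunP => q; rewrite !ffunE addKn.
  by rewrite hle eqxx XcD.
case: ifP => // hle; case: eqP => [e|]; last by rewrite mulr0.
case/eqP: ne.
by rewrite -e msubK.
Qed.

Lemma yhat0 : Y (mono0 n) = 1.
Proof.
apply: funext => m; rewrite yhatE foneE; case: eqP => // _.
rewrite /Xc big1 // => q _; rewrite big1 ?expr0z // => p _.
by rewrite ffunE mulr0.
Qed.

Lemma yhatX a d : Y a ^+ d = Y (mscale d a).
Proof.
elim: d => [|d IH].
  by rewrite expr0 -yhat0; congr yhat; apply/ffunP => q; rewrite !ffunE.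
rewrite exprS IH yhatM; congr yhat; apply/ffunP => q; rewrite !ffunE.
by rewrite mulSn.
Qed.

Lemma yhat_cst0 a : a != mono0 n -> Y a (mono0 n) = 0.
Proof. by move=> h; rewrite yhatE eq_sym (negbTE h). Qed.

End Yhat.

Section Binom.
Variables (A : comUnitRingType) (n : nat).
Local Notation F := (FPS A n).
Variables (U : F) (m : mono n) (N : nat).
Hypothesis U0 : U (mono0 n) = 0.
Hypothesis hN : (mdeg m <= N)%N.

Definition Bs (h : int) : F := \sum_(0 <= k < N.+1) cst ((gbinom h k)%:~R) * U ^+ k.

Lemma Bs_step h : eqm m ((1 + U) * Bs h) (Bs (h + 1)).
Proof.
have E : (1 + U) * Bs h = Bs (h + 1) + cst ((gbinom h N)%:~R) * U ^+ N.+1.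
  rewrite mulrDl mul1r /Bs mulr_sumr.
  rewrite [X in X + _ = _](big_nat_recl _ _ _ (leq0n N)).
  rewrite [X in _ + X = _](big_nat_recr _ _ _ (leq0n N)) /=.
  rewrite [X in _ = X + _](big_nat_recl _ _ _ (leq0n N)) /=.
  rewrite !gbinom0 -!addrA; congr (_ + _).
  rewrite addrA -big_split /= mulrCA -exprS; congr (_ + _).
  apply: eq_bigr => k _; rewrite gbinomS intrD cstD mulrDl; congr (_ + _).
  by rewrite mulrCA -exprS.
rewrite E => a ha; rewrite faddE [in X in _ + X]mulrC fmulE.
rewrite big1_seq ?addr0 // => b /andP[_]; rewrite mem_lower => hb.
rewrite (pow_vanish U0) ?mul0r //.
by rewrite ltnS; apply: leq_trans hN; apply: mdeg_le; apply: mle_trans hb ha.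
Qed.

Lemma Bs0 : Bs 0 = 1.
Proof.
rewrite /Bs big_nat_recl // gbinom0 big1 ?addr0 ?cst1 ?mulr1 // => k _.
by rewrite gbinom_pos bin_small // cst0 mul0r.
Qed.

Lemma Bs_powz h : eqm m (powz (1 + U) h) (Bs h).
Proof.
have L0 : (1 + U) (mono0 n) = 1 by rewrite faddE U0 addr0 foneE eqxx.
case: h => [p|q].
  elim: p => [|p IH]; first by rewrite Bs0; apply: eqm_refl.
  have -> : p.+1%:Z = p%:Z + 1 by rewrite -addn1 PoszD.
  rewrite powzS //; apply: eqm_trans (Bs_step _).
  by apply: eqmM => //; apply: eqm_refl.
have down : forall h, eqm m (powz (1 + U) (h + 1)) (Bs (h + 1)) -> eqm m (powz (1 + U) h) (Bs h).
  move=> h H.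
  have e1 : powz (1 + U) h = fpsinv (1 + U) * powz (1 + U) (h + 1).
    by rewrite powzS // mulrA fpsinv_mul // mul1r.
  have e2 : Bs h = fpsinv (1 + U) * ((1 + U) * Bs h).
    by rewrite mulrA fpsinv_mul // mul1r.
  rewrite e1 e2; apply: eqmM; first exact: eqm_refl.
  exact: eqm_trans H (eqm_sym (Bs_step h)).
elim: q => [|q IH].
  apply: down; rewrite (_ : Negz 0 + 1 = 0%:Z) // Bs0; exact: eqm_refl.
apply: down; rewrite (_ : Negz q.+1 + 1 = Negz q) //; by rewrite !NegzE; lia.
Qed.

End Binom.

End W5.
Import W5.

Module W6.
Local Open Scope ring_scope.

Section Lstruct.
Variables (A : comUnitRingType) (n : nat) (r : 'I_n -> nat) (B : 'M[int]_n)
  (D0 : 'I_n -> int) (x : 'I_n -> A) (z : 'I_n -> nat -> A) (i : nat -> 'I_n).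
Local Notation F := (FPS A n).
Local Notation L j := (Lser r B D0 x z i j : F).
Local Notation Ls j := (Lseq r B D0 x z i j).
Local Notation Y a := (yhat B x a : F).
Local Notation cpm j := (cplus_mono r B i j).
Local Notation pr l j := (pairing r B D0 i l j).

Lemma Lseq_size j : size (Ls j) = j.
Proof. by elim: j => // j IH; rewrite /= size_rcons IH. Qed.

Lemma Lseq_nth j l : (1 <= l <= j)%N -> nth (@fps_zero A n) (Ls j) l.-1 = L l.
Proof.
move=> /andP[l1 lj]; rewrite /Lser.
elim: j lj => [|j IH]; first by case: l l1.
rewrite leq_eqVlt => /orP[/eqP <- //|]; rewrite ltnS => lj.
rewrite /= nth_rcons Lseq_size ifT ?IH //; lia.
Qed.

Lemma LserE j : (1 <= j)%N -> L j = Lnext r B D0 x z i (Ls j.-1) j.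
Proof.
case: j => // j _; rewrite /Lser /= nth_rcons Lseq_size ltnn eqxx //.
Qed.

Definition W j : F := Y (cpm j) * \prod_(1 <= l < j) powz (L l) (- pr j l).

Lemma LserW j : (1 <= j)%N -> L j = \sum_(s < (r (i j)).+1) cst (z (i j) s) * W j ^+ s.
Proof.
move=> j1; rewrite LserE // /Lnext fbigaddE; apply: eq_bigr => s _.
rewrite scaleE fpowE; congr (_ * (_ ^+ _)).
rewrite /W fbigmulE; congr (_ * _); apply: eq_big_nat => l /andP[l1 lj].
rewrite /powz Lseq_nth //; lia.
Qed.

Definition U j : F := \sum_(1 <= s < (r (i j)).+1) cst (z (i j) s) * W j ^+ s.

Hypothesis z0 : forall a, z a 0%N = 1.

Lemma L_1U j : (1 <= j)%N -> L j = 1 + U j.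
Proof.
move=> j1; rewrite LserW // -(big_mkord xpredT (fun s => cst (z (i j) s) * W j ^+ s)).
by rewrite big_nat_recl // z0 cst1 expr0 mulr1 /U big_add1.
Qed.

Lemma W0 j : cpm j != mono0 n -> W j (mono0 n) = 0.
Proof. by move=> h; rewrite /W fmul0 yhat_cst0 // mul0r. Qed.

Lemma U0 j : cpm j != mono0 n -> U j (mono0 n) = 0.
Proof.
move=> h; rewrite /U fsumE big1_seq // => s /andP[_]; rewrite mem_index_iota => /andP[s1 _].
by rewrite cstE (pow_vanish (W0 h)) ?mulr0 //; rewrite (_ : mdeg _ = 0%N) //; apply/eqP; rewrite mdeg_eq0.
Qed.

End Lstruct.

End W6.
Import W6.

Module W7.
Local Open Scope ring_scope.

Section CstMore.
Variables (A : comUnitRingType) (n : nat).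
Local Notation F := (FPS A n).
Lemma cst_nat k : @cst A n (k%:R : A) = k%:R.
Proof. by elim: k => [|k IH]; rewrite ?cst0 // !mulrS cstD cst1 IH. Qed.
Lemma cstX c e : @cst A n (c ^+ e) = @cst A n c ^+ e.
Proof. by elim: e => [|e IH]; rewrite ?expr0 ?cst1 // !exprS cstM IH. Qed.
Lemma cst_prod (I : Type) (s : seq I) (P : pred I) (G : I -> A) :
  @cst A n (\prod_(j <- s | P j) G j) = \prod_(j <- s | P j) @cst A n (G j).
Proof. by apply: (big_morph (@cst A n)); [exact: cstM | exact: cst1]. Qed.
End CstMore.

Section Expand.
Variables (A : comUnitRingType) (n : nat) (r : 'I_n -> nat) (B : 'M[int]_n)
  (D0 : 'I_n -> int) (x : 'I_n -> A) (z : 'I_n -> nat -> A) (i : nat -> 'I_n).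
Hypothesis z0 : forall a, z a 0%N = 1.
Local Notation F := (FPS A n).
Local Notation L j := (Lser r B D0 x z i j : F).
Local Notation Y a := (yhat B x a : F).
Local Notation cpm j := (cplus_mono r B i j).
Local Notation pr l j := (pairing r B D0 i l j).
Local Notation W := (W r B D0 x z i).
Local Notation U := (U r B D0 x z i).
Variable N : nat.

Definition tup j := tuples (r (i j)).+1 N.
Definition sd j (t : seq nat) := (\sum_(1 <= s < (r (i j)).+1) s * nth 0%N t s)%N.
Definition coef j (hh : int) (t : seq nat) : A :=
  (bracecoef hh (nth 0%N t 0) [seq nth 0%N t s | s <- iota 1 (r (i j))])%:~R
  * \prod_(1 <= s < (r (i j)).+1) z (i j) s ^+ nth 0%N t s.

Lemma B_expand j hh :
  Bs (U j) N hh = \sum_(t <- tup j) @cst A n (coef j hh t) * W j ^+ sd j t.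
Proof.
rewrite /Bs /tup (_ : tuples (r (i j)).+1 N = [seq y :: t | y <- iota 0 N.+1, t <- tuples (r (i j)) N]) //.
rewrite (@big_allpairs_dep _ _ _ _ (fun=> seq nat) _ (fun y t => y :: t)).
rewrite (_ : iota 0 N.+1 = index_iota 0 N.+1) //.
apply: eq_big_nat => y /andP[_ hy]; rewrite ltnS in hy.
rewrite /U (_ : (r (i j)).+1 = 1 + r (i j))%N // (multinomial _ _ _ hy) mulr_sumr.
apply: eq_big_seq => t.
rewrite mem_tuples => /andP[/eqP st _].
rewrite /coef /sd /bracecoef /=.
have -> : [seq nth 0%N (y :: t) s | s <- iota 1 (r (i j))] = t.
  rewrite -[RHS](mkseq_nth 0%N t) st /mkseq (_ : 1%N = 1 + 0)%N // iotaDl -map_comp.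
  by apply: eq_map => s.
rewrite intrM (_ : ((multinom y t)%:Z)%:~R = (multinom y t)%:R :> A) // !cstM cst_nat.
rewrite -!mulrA; congr (_ * (_ * _)).
rewrite add1n.
rewrite (eq_big_nat _ _ (F1 := fun s => z (i j) s ^+ nth 0%N (y :: t) s)
   (F2 := fun s => z (i j) s ^+ nth 0%N t (s - 1))); last first.
  by move=> s /andP[s1 _]; case: s s1 => // s _; rewrite subSS subn0.
rewrite (eq_big_nat _ _ (F1 := fun s => (s * nth 0%N (y :: t) s)%N)
   (F2 := fun s => (s * nth 0%N t (s - 1))%N)); last first.
  by move=> s /andP[s1 _]; case: s s1 => // s _; rewrite subSS subn0.
under eq_bigr do rewrite exprMn -exprM.
rewrite big_split /= prodrXr cst_prod; congr (_ * _).
by apply: eq_bigr => s _; rewrite cstX.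
Qed.

End Expand.

End W7.
Import W7.

Module W8.
Local Open Scope ring_scope.

Section Shape.
Variables (A : comUnitRingType) (n : nat) (r : 'I_n -> nat) (B : 'M[int]_n)
  (D0 : 'I_n -> int) (x : 'I_n -> A) (z : 'I_n -> nat -> A) (i : nat -> 'I_n).
Local Notation F := (FPS A n).
Local Notation Y a := (yhat B x a : F).
Local Notation cpm j := (cplus_mono r B i j).
Local Notation pr l j := (pairing r B D0 i l j).
Variable N : nat.
Local Notation sd := (sd r i).
Local Notation coef := (coef r z i).

Lemma nu_shape_rcons k' nu t :
  nu_shape r i k'.+1 (rcons nu t) = nu_shape r i k' nu && (size t == (r (i k'.+1)).+1)%N.
Proof.
rewrite /nu_shape size_rcons eqSS.
case: (eqVneq (size nu) k') => [e|]; last by [].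
rewrite /=.
apply/forallP/andP.
  move=> H; split.
    apply/forallP => j; have := H (widen_ord (leqnSn _) j).
    by rewrite /= nth_rcons e ltn_ord.
  by have := H ord_max; rewrite /= nth_rcons e ltnn eqxx.
move=> [/forallP H1 H2] j; rewrite nth_rcons e.
case: ltnP => hj.
  by have := H1 (Ordinal hj).
have -> : nat_of_ord j = k' by have := ltn_ord j; lia.
by rewrite eqxx.
Qed.

Section Rc.
Variables (k' : nat) (nu : seq (seq nat)) (t : seq nat).
Hypothesis snu : size nu = k'.

Lemma nuc_rcons_lt l s : (1 <= l <= k')%N -> nuc (rcons nu t) l s = nuc nu l s.
Proof. by move=> /andP[l1 lk]; rewrite /nuc nth_rcons snu ifT //; lia. Qed.

Lemma nuc_rcons_last s : nuc (rcons nu t) k'.+1 s = nth 0%N t s.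
Proof. by rewrite /nuc nth_rcons snu /= ltnn eqxx. Qed.

Lemma sdeg_rcons_lt l : (1 <= l <= k')%N -> sdeg r i (rcons nu t) l = sdeg r i nu l.
Proof. by move=> hl; rewrite /sdeg; apply: eq_bigr => s _; rewrite nuc_rcons_lt. Qed.

Lemma sdeg_rcons_last : sdeg r i (rcons nu t) k'.+1 = sd k'.+1 t.
Proof. by rewrite /sdeg /W7.sd; apply: eq_bigr => s _; rewrite nuc_rcons_last. Qed.

Definition hsh (h : nat -> int) : nat -> int :=
  fun l => h l + (sd k'.+1 t)%:Z * - pr k'.+1 l.

Lemma upper_rcons_lt h l : (1 <= l <= k')%N ->
  upper r B D0 i k'.+1 h (rcons nu t) l = upper r B D0 i k' (hsh h) nu l.
Proof.
move=> /andP[l1 lk]; rewrite /upper /hsh big_nat_recr /=; last by lia.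
rewrite sdeg_rcons_last -!addrA; congr (_ + _); rewrite addrC; congr (_ + _).
by apply: eq_big_nat => l' /andP[h1 h2]; rewrite sdeg_rcons_lt //; lia.
Qed.

Lemma upper_rcons_last h : upper r B D0 i k'.+1 h (rcons nu t) k'.+1 = h k'.+1.
Proof. by rewrite /upper big_geq // addr0. Qed.

Lemma jfactor_rcons_lt h l : (1 <= l <= k')%N ->
  jfactor r B D0 z i k'.+1 h (rcons nu t) l = jfactor r B D0 z i k' (hsh h) nu l.
Proof.
move=> hl; rewrite /jfactor upper_rcons_lt // nuc_rcons_lt //.
congr (_%:~R * _).
  by congr bracecoef; apply: eq_map => s; rewrite nuc_rcons_lt.
by apply: eq_bigr => s _; rewrite nuc_rcons_lt.
Qed.

Lemma jfactor_rcons_last h :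
  jfactor r B D0 z i k'.+1 h (rcons nu t) k'.+1 = coef k'.+1 (h k'.+1) t.
Proof.
rewrite /jfactor /W7.coef upper_rcons_last nuc_rcons_last.
congr (_%:~R * _).
  by congr bracecoef; apply: eq_map => s; rewrite nuc_rcons_last.
by apply: eq_bigr => s _; rewrite nuc_rcons_last.
Qed.

Lemma rhs_exp_rcons :
  rhs_exp r B i k'.+1 (rcons nu t) = madd (rhs_exp r B i k' nu) (mscale (sd k'.+1 t) (cpm k'.+1)).
Proof.
apply/ffunP => q; rewrite !ffunE big_nat_recr //= sdeg_rcons_last; congr (_ + _)%N.
  by apply: eq_big_nat => l hl; rewrite sdeg_rcons_lt.
by rewrite /cplus_mono ffunE.
Qed.

Hypothesis xU : forall a, x a \is a GRing.unit.

Lemma rhs_term_rcons h : nu_shape r i k' nu -> size t = (r (i k'.+1)).+1 ->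
  rhs_term r B D0 x z i k'.+1 h (rcons nu t) =
  cst (coef k'.+1 (h k'.+1) t) * Y (mscale (sd k'.+1 t) (cpm k'.+1)) *
  rhs_term r B D0 x z i k' (hsh h) nu.
Proof.
move=> sh st; rewrite /rhs_term nu_shape_rcons sh st eqxx /= !scaleE.
rewrite rhs_exp_rcons -yhatM // big_nat_recr //= jfactor_rcons_last.
rewrite (eq_big_nat _ _ (F2 := fun l => jfactor r B D0 z i k' (hsh h) nu l)); last first.
  by move=> l hl; rewrite jfactor_rcons_lt.
rewrite cstM.
by rewrite mulrACA [LHS]mulrC.
Qed.

End Rc.
End Shape.

End W8.
Import W8.

Module W9.
Local Open Scope ring_scope.

Lemma rearr (R : comPzRingType) (a b c d : R) : a * (b * (c * d)) = (b * c) * (a * d).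
Proof. by rewrite mulrCA (mulrCA a) mulrA. Qed.

Section Main.
Variables (A : comUnitRingType) (n : nat) (r : 'I_n -> nat) (B : 'M[int]_n)
  (D0 : 'I_n -> int) (x : 'I_n -> A) (z : 'I_n -> nat -> A) (i : nat -> 'I_n) (k : nat).
Hypothesis z0 : forall a, z a 0%N = 1.
Hypothesis xU : forall a, x a \is a GRing.unit.
Local Notation F := (FPS A n).
Local Notation L j := (Lser r B D0 x z i j : F).
Local Notation Y a := (yhat B x a : F).
Local Notation cpm j := (cplus_mono r B i j).
Local Notation pr l j := (pairing r B D0 i l j).
Local Notation W := (W r B D0 x z i).
Local Notation U := (U r B D0 x z i).
Local Notation sd := (sd r i).
Local Notation coef := (coef r z i).
Hypothesis hc : forall j, (1 <= j <= k)%N -> cpm j != mono0 n.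
Variable N : nat.
Local Notation tup := (tup r i N).

Lemma Lcst j : (1 <= j <= k)%N -> L j (mono0 n) = 1.
Proof.
move=> hj; have j1 : (1 <= j)%N by case/andP: hj.
by rewrite (L_1U r B D0 x i z0 j1) faddE foneE eqxx (U0 D0 x z (hc hj)) addr0.
Qed.

Lemma Wpow j d : (1 <= j <= k)%N ->
  W j ^+ d = Y (mscale d (cpm j)) * \prod_(1 <= l < j) powz (L l) (- pr j l * d%:Z).
Proof.
move=> hj; rewrite /W6.W exprMn yhatX // -prodrXl; congr (_ * _).
apply: eq_big_nat => l hl; rewrite powzMn //; apply: Lcst; lia.
Qed.

Lemma Lpow_expand j hh (m : mono n) : (1 <= j <= k)%N -> (mdeg m <= N)%N ->
  eqm m (powz (L j) hh)
    (\sum_(t <- tup j) cst (coef j hh t) *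
       (Y (mscale (sd j t) (cpm j)) * \prod_(1 <= l < j) powz (L l) (- pr j l * (sd j t)%:Z))).
Proof.
move=> hj hm.
have j1 : (1 <= j)%N by case/andP: hj.
rewrite (L_1U r B D0 x i z0 j1).
apply: eqm_trans (Bs_powz (U0 D0 x z (hc hj)) hm hh) _.
rewrite B_expand; apply: eqm_eq; apply: eq_bigr => t _; rewrite Wpow //.
Qed.

Fixpoint box (k' : nat) : seq (seq (seq nat)) :=
  if k' is k''.+1 then [seq rcons nu t | nu <- box k'', t <- tup k''.+1] else [:: [::]].

Lemma box_uniq k' : uniq (box k').
Proof.
elim: k' => [|k' IH] //=; apply: allpairs_uniq => //; first exact: tuples_uniq.
by move=> [a b] [a' b'] _ _ /= /rcons_inj [-> ->].
Qed.

Lemma mem_box k' nu : (nu \in box k') = nu_shape r i k' nu && all (all (fun e => e <= N)%N) nu.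
Proof.
elim: k' nu => [|k' IH] nu.
  rewrite inE /nu_shape; case: nu => [|a nu] //=.
  by rewrite eqxx /=; symmetry; apply/andP; split => //; apply/forallP => -[].
change (nu \in [seq rcons nu t | nu <- box k', t <- tup k'.+1]) with
   (nu \in [seq rcons nu t | nu <- box k', t <- tup k'.+1]).
apply/allpairsP/idP.
  move=> [[a b] [ha hb ->]] /=; rewrite IH in ha; rewrite /W7.tup mem_tuples in hb.
  rewrite nu_shape_rcons; case/andP: ha => -> ha; case/andP: hb => -> hb /=.
  by rewrite all_rcons hb ha.
case/lastP: nu => [|nu t].
  by rewrite /nu_shape /=.
rewrite nu_shape_rcons all_rcons => /andP[/andP[h1 h2] /andP[h3 h4]].
exists (nu, t); split => //; first by rewrite IH h1 h4.
by rewrite /W7.tup mem_tuples h2 h3.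
Qed.

Lemma lhsE k' h : (lhs r B D0 x z i k' h : F) = \prod_(1 <= j < k'.+1) powz (L j) (h j).
Proof. by []. Qed.

Lemma main_ind (m : mono n) : (mdeg m <= N)%N -> forall k', (k' <= k)%N -> forall h,
  eqm m (lhs r B D0 x z i k' h : F) (\sum_(nu <- box k') (rhs_term r B D0 x z i k' h nu : F)).
Proof.
move=> hm; elim=> [|k' IH] hk h.
  rewrite lhsE big_geq // big_seq1 /rhs_term /=.
  have -> : nu_shape r i 0 [::] by rewrite /nu_shape /=; apply/forallP => -[].
  rewrite big_geq // scaleE cst1 mul1r.
  rewrite (_ : rhs_exp r B i 0 [::] = mono0 n); last first.
    by apply/ffunP => q; rewrite !ffunE big_geq.
  by rewrite yhat0 //; apply: eqm_refl.
have hj : (1 <= k'.+1 <= k)%N by [].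
rewrite lhsE big_nat_recr //= -lhsE.
apply: eqm_trans.
  apply: eqmM; first exact: eqm_refl.
  exact: (Lpow_expand (h k'.+1) hj hm).
rewrite mulr_sumr.
apply: eqm_trans.
  apply: eqm_sum => t ht.
  rewrite rearr.
  have -> : (lhs r B D0 x z i k' h : F) *
      \prod_(1 <= l < k'.+1) powz (L l) (- pr k'.+1 l * (sd k'.+1 t)%:Z) =
      lhs r B D0 x z i k' (hsh r B D0 i k' t h).
    rewrite !lhsE -big_split /=; apply: eq_big_nat => l hl.
    rewrite -powzD; last by apply: Lcst; lia.
    by rewrite /hsh mulrC.
  apply: eqmM; first exact: eqm_refl.
  apply: IH; exact: ltnW.
simpl.
apply: eqm_eq.
under eq_bigr do rewrite mulr_sumr.
rewrite exchange_big /= (@big_allpairs_dep _ _ _ _ (fun=> seq nat) _ (fun a b => rcons a b)).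
apply: eq_big_seq => nu hnu; apply: eq_big_seq => t ht.
rewrite mem_box in hnu; case/andP: hnu => hnu _.
rewrite /W7.tup mem_tuples in ht; case/andP: ht => /eqP ht _.
rewrite rhs_term_rcons //.
by move: hnu; rewrite /nu_shape => /andP[/eqP].
Qed.

End Main.

End W9.
Import W9.

Module W10.
Local Open Scope ring_scope.

Lemma leq_term_sum (F : nat -> nat) lo hi s : (lo <= s < hi)%N ->
  (F s <= \sum_(lo <= i < hi) F i)%N.
Proof.
move=> /andP[h1 h2]; rewrite (big_cat_nat h1 (ltnW h2)) /=.
by apply: leq_trans (leq_addl _ _); rewrite big_ltn // leq_addr.
Qed.

Lemma prod_nat_zero (R : comPzRingType) (G : nat -> R) lo hi j : (lo <= j < hi)%N -> G j = 0 ->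
  \prod_(lo <= l < hi) G l = 0.
Proof.
move=> /andP[h1 h2] g0; rewrite (big_cat_nat h1 (ltnW h2)) /=.
by rewrite [X in _ * X]big_ltn // g0 mul0r mulr0.
Qed.

Section Final.
Variables (A : comUnitRingType) (n : nat) (r : 'I_n -> nat) (B : 'M[int]_n)
  (D0 : 'I_n -> int) (x : 'I_n -> A) (z : 'I_n -> nat -> A) (i : nat -> 'I_n) (k : nat).
Local Notation F := (FPS A n).
Local Notation cpm j := (cplus_mono r B i j).

Lemma cpm_neq0 j : (exists a, cvec r B i j a != 0) -> cpm j != mono0 n.
Proof.
move=> [a ha]; apply/eqP => /ffunP /(_ a); rewrite !ffunE /cplus => /eqP.
rewrite abszM muln_eq0 !absz_eq0 (negbTE ha) orbF /csign; by case: ifP.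
Qed.

Hypothesis hc : forall j, (1 <= j <= k)%N -> cpm j != mono0 n.

Lemma mdeg_rhs_exp nu j : (1 <= j <= k)%N -> (sdeg r i nu j <= mdeg (rhs_exp r B i k nu))%N.
Proof.
move=> hj.
have : (1 <= mdeg (cpm j))%N by rewrite lt0n mdeg_eq0 hc.
move=> h1; apply: (leq_trans (leq_pmulr _ h1)).
rewrite /mdeg big_distrr /=; apply: leq_sum => q _.
have -> : rhs_exp r B i k nu q = (\sum_(1 <= l < k.+1) sdeg r i nu l * cpm l q)%N by rewrite ffunE.
by apply: (leq_term_sum (fun l => sdeg r i nu l * cpm l q)%N); lia.
Qed.

Lemma rhs_vanish h N nu (m : mono n) : (mdeg m <= N)%N -> nu_shape r i k nu ->
  ~~ all (all (fun e => e <= N)%N) nu -> rhs_term r B D0 x z i k h nu m = 0.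
Proof.
move=> hm sh hall; rewrite /rhs_term sh scaleE cstE.
move: hall => /allPn [l hl /allPn [e he eN]].
rewrite -ltnNge in eN.
have [j0 j0k el] : exists2 j0, (j0 < k)%N & l = nth [::] nu j0.
  exists (index l nu); last by rewrite nth_index.
  by case/andP: sh => /eqP <- _; rewrite index_mem.
have [s sr es] : exists2 s, (s < (r (i j0.+1)).+1)%N & e = nth 0%N l s.
  exists (index e l); last by rewrite nth_index.
  case/andP: sh => _ /forallP /(_ (Ordinal j0k)) /= /eqP <-; rewrite -el index_mem //.
have hj : (1 <= j0.+1 <= k)%N by [].
have ne : nuc nu j0.+1 s = e by rewrite /nuc /= -el es.
suff : (N < sdeg r i nu j0.+1)%N \/ jfactor r B D0 z i k h nu j0.+1 = 0.
  case=> [hs|hz].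
    rewrite yhatE; case: eqP => [e2|]; last by rewrite mulr0.
    have := mdeg_rhs_exp nu hj; rewrite -e2; lia.
  by rewrite (prod_nat_zero (j := j0.+1)) ?mul0r.
case: s sr es ne => [|s] sr es ne.
  rewrite /jfactor /bracecoef /multinom ne.
  case: eqP => [esum|]; last first.
    by move=> _; right; rewrite mulr0 (_ : (0:int)%:~R = 0 :> A) // mul0r.
  left; apply: (leq_trans eN); rewrite esum.
  rewrite sumnE big_map /sdeg.
  rewrite (_ : iota 1 (r (i j0.+1)) = index_iota 1 (r (i j0.+1)).+1); last by rewrite /index_iota subSS subn0.
  rewrite [X in (_ <= X)%N]big_seq [X in (X <= _)%N]big_seq; apply: leq_sum => q.
  by rewrite mem_index_iota => /andP[q1 _]; exact: leq_pmull.
left; apply: (leq_trans eN); rewrite -ne /sdeg.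
apply: (leq_trans _ (leq_term_sum (fun q => q * nuc nu j0.+1 q)%N _)).
  exact: leq_pmull.
by rewrite sr.
Qed.

End Final.

End W10.
Import W10.

Unset Implicit Arguments. Set Strict Implicit.
Local Open Scope ring_scope.

Theorem lemmaL4
  (A : comUnitRingType) (n : nat) (r : 'I_n -> nat) (B : 'M[int]_n)
  (D0 : 'I_n -> int) (x : 'I_n -> A) (z : 'I_n -> nat -> A)
  (k : nat) (i : nat -> 'I_n) (h : nat -> int) :
  (0 < n)%N ->
  (forall a, (0 < r a)%N) ->
  (forall a, 0 < D0 a) ->
  (forall a b, D0 a * (r a)%:Z * B a b = - (D0 b * (r b)%:Z * B b a)) ->
  (forall a, x a \is a GRing.unit) ->
  (forall a, z a 0%N = 1) ->
  (forall a, z a (r a) = 1) ->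
  (forall a s, (s <= r a)%N -> z a s = z a (r a - s)%N) ->
  (forall j, (1 <= j < k)%N -> i j != i j.+1) ->
  (forall j, (1 <= j <= k)%N ->
     (exists a, cvec r B i j a != 0) /\
     ((forall a, 0 <= cvec r B i j a) \/ (forall a, cvec r B i j a <= 0))) ->
  fps_hasSum (rhs_term r B D0 x z i k h) (lhs r B D0 x z i k h).
Proof.
move=> _ _ _ _ xU z0 _ _ _ hcv m.
have hc : forall j, (1 <= j <= k)%N -> cplus_mono r B i j != mono0 n.
  by move=> j hj; apply: cpm_neq0; case: (hcv j hj).
exists (box r i (mdeg m) k); split.
- exact: box_uniq.
- move=> nu hnu; rewrite mem_box negb_and in hnu.
  case: (boolP (nu_shape r i k nu)) => hs; last by rewrite /rhs_term (negbTE hs).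
  rewrite hs /= in hnu.
  exact: (rhs_vanish D0 x z hc h (leqnn _) hs hnu).
- have := main_ind D0 z0 xU hc (leqnn (mdeg m)) (leqnn k) h (mle_refl m).
  by rewrite fsumE.
Qed.
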